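(* Define $L:\mathbf{MKF}_\infty\to\mathbf{KFR}$ by $L(\langle W,S\rangle)=\langle W,\bigcap S\rangle$ and $L(f)=f$, and $M:\mathbf{KFR}\to\mathbf{MKF}_\infty$ by $M(\langle W,R\rangle)=\langle W,\{R\}\rangle$ and $M(f)=f$. Then $L$ and $M$ are well-defined functors and $L\circ M\cong \mathrm{id}_{\mathbf{KFR}}$, $M\circ L\cong\mathrm{id}_{\mathbf{MKF}_\infty}$; hence $\mathbf{MKF}_\infty$ and $\mathbf{KFR}$ are equivalent.
   Context: A Kripke frame is a pair $\langle W,R\rangle$ with $W$ a non-empty set and $R\subseteq W\times W$. A homomorphism of Kripke frames $f:\langle W_1,R_1\rangle\to\langle W_2,R_2\rangle$ is a map $f:W_1\to W_2$ such that (a) $vR_1w$ implies $f(v)R_2f(w)$, and (b) if $f(w)R_2u$ then there is $v\in W_1$ with $wR_1v$ and $f(v)=u$. $\mathbf{KFR}$ is the category of Kripke frames and their homomorphisms. A multi-relational Kripke frame is a pair $\langle W,S\rangle$ where $W$ is a non-empty set and $S$ is a non-empty set of binary relations on $W$. It is completely downward directed if for every $S'\subseteq S$ there is $R\in S$ with $R\subseteq\bigcap S'$ (with $\bigcap\emptyset=W\times W$); equivalently $\bigcap S\in S$. A homomorphism of multi-relational Kripke frames $f:\langle W_1,S_1\rangle\to\langle W_2,S_2\rangle$ is a map $f:W_1\to W_2$ such that: (i) for every $x\in W_1$ and $R_2\in S_2$ there is $R_1\in S_1$ such that for all $y\in W_1$, $xR_1y$ implies $f(x)R_2f(y)$; (ii)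 for every $x\in W_1$ and $R_1\in S_1$ there is $R_2\in S_2$ such that for all $u\in W_2$, if $f(x)R_2u$ then there exists $y\in W_1$ with $xR_1y$ and $f(y)=u$. $\mathbf{MKF}_\infty$ is the category of completely downward directed multi-relational Kripke frames with these homomorphisms. *)

(* Defs.v *)
Set Implicit Arguments.

Definition rel (W : Type) := W -> W -> Prop.

Record KFrame := KF { kW : Type; kW_ne : inhabited kW; kR : rel kW }.

Record MFrame := MF { mW : Type; mW_ne : inhabited mW;
                      mS : rel mW -> Prop; mS_ne : exists R, mS R }.

(* Intersection of a set of relations (the empty intersection is W x W). *)
Definition bigcap (W : Type) (S : rel W -> Prop) : rel W :=
  fun x y => forall R, S R -> R x y.

Definition subrel (W : Type) (R Q : rel W) : Prop := forall x y, R x y -> Q x y.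

(* Completely downward directed: every subset S' of S has a lower bound in S. *)
Definition cdd (F : MFrame) : Prop :=
  forall S' : rel (mW F) -> Prop, (forall R, S' R -> mS F R) ->
    exists R, mS F R /\ subrel R (bigcap S').

Definition kHom (F G : KFrame) (f : kW F -> kW G) : Prop :=
  (forall v w, kR F v w -> kR G (f v) (f w)) /\
  (forall w u, kR G (f w) u -> exists v, kR F w v /\ f v = u).

Definition mHom (F G : MFrame) (f : mW F -> mW G) : Prop :=
  (forall x R2, mS G R2 -> exists R1, mS F R1 /\
      forall y, R1 x y -> R2 (f x) (f y)) /\
  (forall x R1, mS F R1 -> exists R2, mS G R2 /\
      forall u, R2 (f x) u -> exists y, R1 x y /\ f y = u).

Definition kIso (F G : KFrame) (f : kW F -> kW G) : Prop :=
  kHom F G f /\ exists g : kW G -> kW F, kHom G F g /\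
    (forall x, g (f x) = x) /\ (forall y, f (g y) = y).

Definition mIso (F G : MFrame) (f : mW F -> mW G) : Prop :=
  mHom F G f /\ exists g : mW G -> mW F, mHom G F g /\
    (forall x, g (f x) = x) /\ (forall y, f (g y) = y).

(* The functor L on objects: <W,S> |-> <W, /\ S>; on morphisms f |-> f. *)
Definition L_obj (F : MFrame) : KFrame := KF (mW_ne F) (bigcap (mS F)).

(* The functor M on objects: <W,R> |-> <W,{R}>; on morphisms f |-> f. *)
Definition M_obj (K : KFrame) : MFrame :=
  MF (kW_ne K) (fun Q => Q = kR K) (ex_intro (fun Q => Q = kR K) (kR K) eq_refl).

(* Main.v *)
Require Import Defs.

Lemma cdd_min (F : MFrame) : cdd F -> exists R0, mS F R0 /\ subrel R0 (bigcap (mS F)).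
Proof. intro H. apply (H (mS F)). auto. Qed.

Theorem mainTheorem2 :
  (* L is well defined: L(f) = f is a KFR-morphism for every MKF_inf-morphism f *)
  (forall (F G : MFrame), cdd F -> cdd G ->
     forall f : mW F -> mW G, mHom F G f -> kHom (L_obj F) (L_obj G) f) /\
  (* M is well defined: M(K) is completely downward directed, and M(f) = f
     is an MKF_inf-morphism for every KFR-morphism f *)
  (forall K : KFrame, cdd (M_obj K)) /\
  (forall (K1 K2 : KFrame) (f : kW K1 -> kW K2),
     kHom K1 K2 f -> mHom (M_obj K1) (M_obj K2) f) /\
  (* L o M is naturally isomorphic to id_KFR *)
  (exists eta : forall K : KFrame, kW (L_obj (M_obj K)) -> kW K,
     (forall K, kIso (L_obj (M_obj K)) K (eta K)) /\
     (forall (K1 K2 : KFrame) (f : kW K1 -> kW K2), kHom K1 K2 f ->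
        forall x, eta K2 (f x) = f (eta K1 x))) /\
  (* M o L is naturally isomorphic to id_MKF_inf *)
  (exists eps : forall F : MFrame, mW (M_obj (L_obj F)) -> mW F,
     (forall F, cdd F -> mIso (M_obj (L_obj F)) F (eps F)) /\
     (forall (F G : MFrame) (f : mW F -> mW G), cdd F -> cdd G -> mHom F G f ->
        forall x, eps G (f x) = f (eps F x))).
Proof.
split; [|split; [|split; [|split]]].
- intros F G HF HG f [H1 H2]. destruct (@cdd_min _ HF) as [R0 [HR0 HR0s]]. split.
  + intros v w Hvw R2 HR2. destruct (H1 v R2 HR2) as [R1 [HR1 Hi]].
    apply Hi. apply Hvw. exact HR1.
  + intros w u Hu. destruct (H2 w R0 HR0) as [R2 [HR2 Hi]].
    destruct (Hi u (Hu R2 HR2)) as [y [Hy Hfy]]. exists y. split; [apply HR0s; exact Hy|exact Hfy].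
- intros K S' HS'. exists (kR K). split; [reflexivity|].
  intros x y Hxy R HR. rewrite (HS' R HR). exact Hxy.
- intros K1 K2 f [H1 H2]. split.
  + intros x R2 HR2. exists (kR K1). split; [reflexivity|]. simpl in HR2. subst.
    intros y Hy. apply H1; exact Hy.
  + intros x R1 HR1. exists (kR K2). split; [reflexivity|]. simpl in HR1. subst.
    intros u Hu. apply H2; exact Hu.
- exists (fun K x => x). split.
  + intro K. split.
    * split.
      -- intros v w H. apply H. reflexivity.
      -- intros w u H. exists u. split; auto. simpl. intros R HR. subst. exact H.
    * exists (fun x => x). split; [|split; reflexivity]. split.
      -- intros v w H R HR. simpl in HR. subst. exact H.
      -- intros w u H. exists u. split; auto. apply H. reflexivity.
  + intros; reflexivity.
- exists (fun F x => x). split.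
  + intros F HF. destruct (@cdd_min _ HF) as [R0 [HR0 HR0s]]. split.
    * split.
      -- intros x R2 HR2. exists (bigcap (mS F)). split; [reflexivity|].
         intros y Hy. apply Hy. exact HR2.
      -- intros x R1 HR1. simpl in HR1. subst. exists R0. split; auto.
         intros u Hu. exists u. split; auto.
    * exists (fun x => x). split; [|split; reflexivity]. split.
      -- intros x R2 HR2. simpl in HR2. subst. exists R0. split; auto.
      -- intros x R1 HR1. exists (bigcap (mS F)). split; [reflexivity|].
         intros u Hu. exists u. split; auto. apply Hu. exact HR1.
  + intros; reflexivity.
Qed.
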